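(* Let $\mathfrak{e}_1$, $\mathfrak{e}_2$, $\mathfrak{e}_3$ be the consecutive positively oriented edges of an elementary triangle of $\mathcal{T}\mathcal{L}$. Then the zero curvature condition \[ L(\mathfrak{e}_3,\lambda)L(\mathfrak{e}_2,\lambda)L(\mathfrak{e}_1,\lambda)=I \] is equivalent to the following set of equations: \begin{equation} f_1+f_2+f_3=0,\qquad g_1+g_2+g_3=0, \end{equation} and \begin{equation} f_1g_1=f_3g_2\quad\Leftrightarrow\quad f_2g_2=f_1g_3 \quad\Leftrightarrow\quad f_3g_3=f_2g_1, \end{equation} with the understanding that $h_k=(f_kg_k)^{-1}$, $k=1,2,3$.
   Context: $\mathcal{T}\mathcal{L}$ is the regular triangular lattice with vertices $k+\ell\omega+m\omega^2$ ($k,\ell,m\in\mathbb Z$, $\omega=e^{2\pi i/3}$) and edges between vertices at distance 1. Edges of the types $(\mathfrak{z},\mathfrak{z}+1)$, $(\mathfrak{z},\mathfrak{z}+\omega)$, $(\mathfrak{z},\mathfrak{z}+\omega^2)$ are declared positively oriented; with this, each elementary triangle (e.g. $(\mathfrak{z},\mathfrak{z}+\omega,\mathfrak{z}-1)$ or $(\mathfrak{z},\mathfrak{z}+\omega^2,\mathfrak{z}-1)$) has three consecutive positively oriented edges. To every positively oriented edge $\mathfrak{e}$ is attached a triple $(f,g,h)\in\mathbb C^3$ with $fgh=1$ and the matrix \[ L(\mathfrak{e},\lambda)=(1+\lambda^3)^{-1/3}\begin{pmatrix} 1 & \lambda f & 0 \\ 0 & 1 & \lambda g \\ \lambda h & 0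 & 1\end{pmatrix}, \] an element of the twisted loop group $\{L:\mathbb C\to SL(3,\mathbb C)\,|\,L(\omega\lambda)=\Omega L(\lambda)\Omega^{-1}\}$, $\Omega=\mathrm{diag}(1,\omega,\omega^2)$. Here $(f_k,g_k,h_k)$ is the triple attached to $\mathfrak{e}_k$. *)

(* Defs.v *)
From HB Require Import structures.
From mathcomp Require Import all_boot all_order all_algebra.
Set Implicit Arguments. Unset Strict Implicit. Unset Printing Implicit Defensive.
Import Order.TTheory GRing.Theory Num.Theory.
Local Open Scope ring_scope.

(* The field C is any numeric algebraically closed field (e.g. the complex
   numbers); it carries the cube root n.-root used for (1+l^3)^(-1/3). *)

Definition Lraw (C : numClosedFieldType) (f g h l : C) : 'M[C]_3 :=
  \matrix_(i < 3, j < 3)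
    match nat_of_ord i, nat_of_ord j with
    | 0%N, 1%N => l * f
    | 1%N, 2%N => l * g
    | 2%N, 0%N => l * h
    | a, b => if (a == b)%N then 1 else 0
    end.

Definition Lmat (C : numClosedFieldType) (f g h l : C) : 'M[C]_3 :=
  (3.-root (1 + l ^+ 3))^-1 *: Lraw f g h l.

Definition zero_curvature (C : numClosedFieldType)
    (f1 g1 h1 f2 g2 h2 f3 g3 h3 : C) : Prop :=
  forall l : C, 1 + l ^+ 3 != 0 ->
    Lmat f3 g3 h3 l *m Lmat f2 g2 h2 l *m Lmat f1 g1 h1 l = 1%:M.

(* Main.v *)
Require Import Defs.
From mathcomp Require Import all_boot all_order all_algebra.
From mathcomp Require Import ring.
Import GRing.Theory Num.Theory.
Set Implicit Arguments. Unset Strict Implicit.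
Local Open Scope ring_scope.

Lemma sum3 (R : nmodType) (F : 'I_3 -> R) : \sum_(i < 3) F i = F ord0 + F (inord 1) + F (inord 2).
Proof. rewrite !big_ord_recr big_ord0 /= add0r; congr (_ + _ + _); congr F; apply: val_inj; by rewrite /= ?inordK. Qed.

Definition Mexp (C : numClosedFieldType) (f1 g1 h1 f2 g2 h2 f3 g3 h3 l : C) : 'M[C]_3 :=
  \matrix_(i < 3, j < 3)
    match nat_of_ord i, nat_of_ord j with
    | 0%N, 0%N => 1 + l ^+ 3 * (f3 * g2 * h1)
    | 0%N, 1%N => l * (f1 + f2 + f3)
    | 0%N, _ => l ^+ 2 * (f3 * g2 + f3 * g1 + f2 * g1)
    | 1%N, 0%N => l ^+ 2 * (g3 * h2 + g3 * h1 + g2 * h1)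
    | 1%N, 1%N => 1 + l ^+ 3 * (g3 * h2 * f1)
    | 1%N, _ => l * (g1 + g2 + g3)
    | _, 0%N => l * (h1 + h2 + h3)
    | _, 1%N => l ^+ 2 * (h3 * f2 + h3 * f1 + h2 * f1)
    | _, _ => 1 + l ^+ 3 * (h3 * f2 * g1)
    end.

Lemma rawE (C : numClosedFieldType) (f1 g1 h1 f2 g2 h2 f3 g3 h3 l : C) :
 Lraw f3 g3 h3 l *m Lraw f2 g2 h2 l *m Lraw f1 g1 h1 l = Mexp f1 g1 h1 f2 g2 h2 f3 g3 h3 l.
Proof.
apply/matrixP => i j.
rewrite !mxE !sum3 !mxE !sum3 !mxE /= !inordK //.
by case: i => [[|[|[|?]]] ?] //=; case: j => [[|[|[|?]]] ?] //=; ring.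
Qed.

Lemma prodE (C : numClosedFieldType) (f1 g1 h1 f2 g2 h2 f3 g3 h3 l : C) :
 Lmat f3 g3 h3 l *m Lmat f2 g2 h2 l *m Lmat f1 g1 h1 l =
 (1 + l ^+ 3)^-1 *: Mexp f1 g1 h1 f2 g2 h2 f3 g3 h3 l.
Proof.
rewrite /Lmat -!scalemxAl -!scalemxAr !scalerA -scalemxAl scalerA rawE; congr (_ *: _).
set r := 3.-root _.
have hr : r ^+ 3 = 1 + l ^+ 3 by apply: rootCK.
by rewrite -hr -exprVn !exprS expr0 mulr1 mulrA.
Qed.

Lemma ZC_iff (C : numClosedFieldType) (f1 g1 h1 f2 g2 h2 f3 g3 h3 : C) :
  f1 * g1 * h1 = 1 -> f2 * g2 * h2 = 1 -> f3 * g3 * h3 = 1 ->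
  zero_curvature f1 g1 h1 f2 g2 h2 f3 g3 h3 <->
        [/\ f1 + f2 + f3 = 0, g1 + g2 + g3 = 0 & f1 * g1 = f3 * g2].
Proof.
move=> H1 H2 H3; split.
  move/(_ 1); rewrite prodE expr1n.
  have two : (1 + 1 : C) != 0 by rewrite (_ : 1 + 1 = 2%:R) // pnatr_eq0.
  move=> /(_ two) /matrixP E.
  have hi : (1 + 1 : C)^-1 != 0 by rewrite invr_eq0.
  have := E ord0 (inord 1); have := E (inord 1) (inord 2); have := E ord0 ord0.
  rewrite !mxE -!val_eqE /= !inordK //= expr1n !mul1r => e00 e12 e01.
  split.
  - by move/eqP: e01; rewrite mulf_eq0 (negbTE hi) /= => /eqP.
  - by move/eqP: e12; rewrite mulf_eq0 (negbTE hi) /= => /eqP.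
  - have e : f3 * g2 * h1 = 1.
      move: e00 => /(congr1 (fun x => (1 + 1) * x)); rewrite mulrA mulfV // mul1r mulr1.
      by move/addrI.
    have : f1*g1*(f3*g2*h1) = f3*g2*(f1*g1*h1) by ring.
    by rewrite e H1 !mulr1.
move=> [Sf Sg X1] l hl.
rewrite prodE.
have ef3 : f3 = -(f1 + f2) by apply/eqP; rewrite -subr_eq0 opprK addrC Sf.
have eg3 : g3 = -(g1 + g2) by apply/eqP; rewrite -subr_eq0 opprK addrC Sg.
subst f3 g3.
have K0 : f1 * g1 + (f1 + f2) * g2 = 0 by rewrite X1; ring.
set K := f1 * g1 + (f1 + f2) * g2 in K0.
have nz : forall a b c : C, a * b * c = 1 -> a * b != 0 /\ c = (a * b)^-1.
  move=> a b c H; have ab : a * b != 0.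
    by apply/eqP => e; move: H; rewrite e mul0r => /eqP; rewrite eq_sym oner_eq0.
  by split=> //; apply: (mulfI ab); rewrite mulfV.
have [nX e1] := nz _ _ _ H1; have [nY e2] := nz _ _ _ H2; have [nZ e3] := nz _ _ _ H3.
subst h1 h2 h3.
have nf1 : f1 != 0 by apply: contraNneq nX => ->; rewrite mul0r.
have ng1 : g1 != 0 by apply: contraNneq nX => ->; rewrite mulr0.
have nf2 : f2 != 0 by apply: contraNneq nY => ->; rewrite mul0r.
have ng2 : g2 != 0 by apply: contraNneq nY => ->; rewrite mulr0.
have nf12 : f1 + f2 != 0 by apply: contraNneq nZ => ->; rewrite oppr0 mul0r.
have ng12 : g1 + g2 != 0 by apply: contraNneq nZ => ->; rewrite oppr0 mulr0.
have ef1 : f1 = - (f2 * g2) / (g1 + g2).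
  apply: (mulIf ng12); rewrite mulfVK //; apply/eqP; rewrite -subr_eq0 opprK.
  by rewrite -K0 /K; apply/eqP; ring.
clear K0 X1 Sf Sg H1 H2 H3 nz.
subst f1.
have nfg : - (f2 * g2) + f2 * (g1 + g2) != 0.
  by rewrite (_ : _ + _ = f2 * g1) ?mulf_neq0 //; ring.
apply/matrixP => i j; rewrite !mxE.
case: i => [[|[|[|?]]] ?] //=; case: j => [[|[|[|?]]] ?] //=.
all: field; by rewrite ?hl ?ng1 ?ng2 ?nf2 ?ng12 ?nfg.
Qed.

Lemma eqK (C : numClosedFieldType) (a b k : C) : a - b = k -> (a = b <-> k = 0).
Proof. move=> <-; split=> [->|/eqP]; [by rewrite subrr | by rewrite subr_eq0 => /eqP]. Qed.

Theorem theorem7 (C : numClosedFieldType) (f1 g1 h1 f2 g2 h2 f3 g3 h3 : C) :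
  f1 * g1 * h1 = 1 -> f2 * g2 * h2 = 1 -> f3 * g3 * h3 = 1 ->
  [/\ zero_curvature f1 g1 h1 f2 g2 h2 f3 g3 h3 <->
        [/\ f1 + f2 + f3 = 0, g1 + g2 + g3 = 0 & f1 * g1 = f3 * g2],
      zero_curvature f1 g1 h1 f2 g2 h2 f3 g3 h3 <->
        [/\ f1 + f2 + f3 = 0, g1 + g2 + g3 = 0 & f2 * g2 = f1 * g3] &
      zero_curvature f1 g1 h1 f2 g2 h2 f3 g3 h3 <->
        [/\ f1 + f2 + f3 = 0, g1 + g2 + g3 = 0 & f3 * g3 = f2 * g1]].
Proof.
move=> H1 H2 H3; have Z := ZC_iff H1 H2 H3.
have aux : forall P Q : Prop, (forall (Sf : f1 + f2 + f3 = 0) (Sg : g1 + g2 + g3 = 0), f1 * g1 = f3 * g2 <-> P) ->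
   (zero_curvature f1 g1 h1 f2 g2 h2 f3 g3 h3 <-> [/\ f1 + f2 + f3 = 0, g1 + g2 + g3 = 0 & P]).
  move=> P Q HP; rewrite Z; split=> [[a b c]|[a b c]]; split=> //; by apply/(HP a b).
split=> //; apply: (aux _ True) => Sf Sg.
- have ef3 : f3 = -(f1 + f2) by apply/eqP; rewrite -subr_eq0 opprK addrC Sf.
  have eg3 : g3 = -(g1 + g2) by apply/eqP; rewrite -subr_eq0 opprK addrC Sg.
  rewrite ef3 eg3 (eqK (k := f1 * g1 + (f1 + f2) * g2)); last by ring.
  by rewrite (eqK (k := f1 * g1 + (f1 + f2) * g2)); last by ring.
- have ef3 : f3 = -(f1 + f2) by apply/eqP; rewrite -subr_eq0 opprK addrC Sf.
  have eg3 : g3 = -(g1 + g2) by apply/eqP; rewrite -subr_eq0 opprK addrC Sg.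
  rewrite ef3 eg3 (eqK (k := f1 * g1 + (f1 + f2) * g2)); last by ring.
  by rewrite (eqK (k := f1 * g1 + (f1 + f2) * g2)); last by ring.
Qed.
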